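(* Let $H=(V,E)$ be a hypergraph with at least $3$ edges and let $L=\mathcal L(H)$ be its intersection graph. (1) If $H$ is eulerian, then $L$ has a Hamilton cycle. (2) If $H$ is quasi-eulerian, then $L$ has a spanning subgraph each of whose connected components is $1$-regular or $2$-regular. (3) If $H$ has an Euler family containing no closed strict trail of length less than $3$, then $L$ has a $2$-factor.
   Context: A hypergraph $H=(V,E)$ consists of a finite nonempty vertex set $V$, a finite edge set $E$ disjoint from $V$, and an incidence function assigning to each edge $e\in E$ a subset of $V$ (also denoted $e$); distinct edges may have the same vertex set. Hypergraphs are assumed to have no empty edges. A walk of length $k$ is a sequence $W=v_0e_1v_1e_2\cdots e_kv_k$ with $v_i\in V$, $e_i\in E$, such that for each $i$, $v_{i-1}\ne v_i$ and $v_{i-1},v_i\in e_i$; the $v_i$ are its anchors. $W$ is closed if $k\ge 2$ and $v_0=v_k$; it is a strict trail if $e_1,\dots,e_k$ are pairwise distinct. An Euler tour of $H$ is a closed strict trail traversing every edge of $H$; an Euler family of $H$ is a family of closed strict trails such that every edge of $H$ lies in exactly one trail and no two trails have a common anchor. $H$ is eulerian (quasi-eulerian) if it has an Euler tour (Euler family). The intersection graph $\mathcal L(H)$ is the simple graph with vertex set $E$ in which distinct $e,e'$ are adjacent iff $e\cap e'\ne\emptyset$. *)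

(* Defs.v *)
From mathcomp Require Import all_boot.
Set Implicit Arguments. Unset Strict Implicit. Unset Printing Implicit Defensive.

(* A hypergraph is given by a vertex finType V, an edge finType E and an
   incidence function inc : E -> {set V} (distinct edges may share vertex sets).
   Nonemptiness of V and of each edge are hypotheses of the theorem. *)

Section Hyper.
Variables (V E : finType) (inc : E -> {set V}).

(* A walk v0 e1 v1 ... ek vk is represented by (v0, [:: (e1,v1); ...; (ek,vk)]). *)
Definition walk := (V * seq (E * V))%type.

Fixpoint walk_steps_ok (v0 : V) (s : seq (E * V)) : bool :=
  match s with
  | [::] => true
  | (e, v) :: s' => [&& v0 != v, v0 \in inc e, v \in inc e & walk_steps_ok v s']
  end.

Definition is_walk (W : walk) : bool := walk_steps_ok W.1 W.2.
Definition walk_length (W : walk) : nat := size W.2.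
Definition walk_edges (W : walk) : seq E := map fst W.2.
Definition anchors (W : walk) : seq V := W.1 :: map snd W.2.

Definition is_closed (W : walk) : bool :=
  (2 <= walk_length W) && (last W.1 (map snd W.2) == W.1).
Definition is_strict_trail (W : walk) : bool := uniq (walk_edges W).

Definition closed_strict_trail (W : walk) : bool :=
  [&& is_walk W, is_closed W & is_strict_trail W].

Definition euler_tour (W : walk) : Prop :=
  closed_strict_trail W /\ forall e : E, e \in walk_edges W.

Definition eulerian : Prop := exists W, euler_tour W.

Definition euler_family (F : seq walk) : Prop :=
  [/\ all closed_strict_trail F,
      (forall e : E, count (fun W => e \in walk_edges W) F = 1) &
      pairwise (fun W1 W2 => ~~ has (fun v => v \in anchors W2) (anchors W1)) F].

Definition quasi_eulerian : Prop := exists F, euler_family F.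

Definition igraph : rel E := fun e e' => (e != e') && (inc e :&: inc e' != set0).
End Hyper.

Section Graphs.
Variable (T : finType).

Definition hamilton_cycle (g : rel T) (c : seq T) : Prop :=
  [/\ uniq c, (forall x : T, x \in c) & cycle g c].

Definition spanning_subgraph (F g : rel T) : Prop :=
  symmetric F /\ (forall x y, F x y -> g x y).

Definition degree (F : rel T) (x : T) : nat := #|[set y | F x y]|.

Definition components_1_or_2_regular (F : rel T) : Prop :=
  forall x : T, (forall y, connect F x y -> degree F y = 1)
             \/ (forall y, connect F x y -> degree F y = 2).

Definition two_factor (F g : rel T) : Prop :=
  spanning_subgraph F g /\ forall x : T, degree F x = 2.
End Graphs.

(* Main.v *)
Require Import Defs.
From mathcomp Require Import all_boot.
Set Implicit Arguments. Unset Strict Implicit. Unset Printing Implicit Defensive.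

Section Aux.
Variable T : eqType.

Lemma prev_at_last (x y : T) t : x \notin t -> prev_at x x y t = last y t.
Proof.
elim: t y => [|z t IH] y /=; first by rewrite eqxx.
by rewrite inE negb_or => /andP[/negbTE -> /IH].
Qed.

Lemma nb_rot (s : seq T) x : uniq s -> x \in s ->
  exists t, [/\ uniq (x :: t), size (x :: t) = size s,
               next s x = head x t & prev s x = last x t].
Proof.
move=> us xs; case: (rot_to xs) => i t Ht.
have ut : uniq (x :: t) by rewrite -Ht rot_uniq.
exists t; split => //; first by rewrite -Ht size_rot.
  rewrite -(next_rot i us) Ht /=; case: t {Ht ut} => [|y t] /=; by rewrite eqxx.
rewrite -(prev_rot i us) Ht /=; move: ut => /= /andP[xt _].
by rewrite prev_at_last.
Qed.

Definition nb (s : seq T) (x y : T) := (x \in s) && ((y == next s x) || (y == prev s x)).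

Lemma nb_sym (s : seq T) : uniq s -> forall x y, nb s x y -> nb s y x.
Proof.
move=> us x y /andP[xs /orP[]/eqP->]; rewrite /nb.
  by rewrite mem_next xs prev_next ?eqxx ?orbT.
by rewrite mem_prev xs next_prev ?eqxx.
Qed.

Lemma nb_mem (s : seq T) (x y : T) : nb s x y -> y \in s.
Proof. by case/andP=> xs /orP[]/eqP->; rewrite ?mem_next ?mem_prev. Qed.

Lemma next_neq (s : seq T) (x : T) : uniq s -> x \in s -> 2 <= size s -> next s x != x.
Proof.
move=> us xs; have [t [ut st -> _]] := nb_rot us xs.
rewrite -st; case: t ut {st} => [|y t] //= /andP[]; rewrite inE negb_or eq_sym.
by case/andP.
Qed.

Lemma prev_neq (s : seq T) (x : T) : uniq s -> x \in s -> 2 <= size s -> prev s x != x.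
Proof.
move=> us xs s2; apply/eqP => h.
have := next_neq us (etrans (mem_prev s x) xs) s2; rewrite next_prev // h.
by rewrite eqxx.
Qed.

Lemma next_prev_eq2 (s : seq T) (x : T) : uniq s -> x \in s -> size s = 2 -> next s x = prev s x.
Proof.
move=> us xs; have [t [ut st -> ->]] := nb_rot us xs.
by rewrite -st; case: t {ut st} => [|y [|z t]].
Qed.

Lemma next_prev_neq3 (s : seq T) (x : T) : uniq s -> x \in s -> 3 <= size s -> next s x != prev s x.
Proof.
move=> us xs; have [t [ut st -> ->]] := nb_rot us xs.
rewrite -st; case: t ut {st} => [|y [|z t]] //= /and3P[_ yzt _] _.
apply/eqP => h; move: yzt; rewrite h.
have : last z t \in z :: t by rewrite mem_last.
by move=> ->.
Qed.
End Aux.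

Section Main.
Variables (V E : finType) (inc : E -> {set V}).

Definition meet (e f : E) := inc e :&: inc f != set0.

Lemma walk_aux v e w s : walk_steps_ok inc v ((e, w) :: s) ->
  path meet e (map fst s) && (last w (map snd s) \in inc (last e (map fst s))).
Proof.
elim: s v e w => [|[e2 w2] s IH] v e w /=.
  by rewrite andbT => /and3P[_ _ ->].
move=> /and4P[_ _ we /and4P[ww2 we2 w2e2 rest]].
have := IH w e2 w2; rewrite /= we2 w2e2 rest ww2 => /(_ isT)/andP[-> ->].
rewrite andbT andbT /meet; apply/set0Pn; exists w; by rewrite inE we we2.
Qed.

Lemma cst_cycle W : closed_strict_trail inc W -> cycle meet (walk_edges W).
Proof.
case: W => v0 [|[e1 w1] s] /and3P[/= wk /andP[l2 cl] _] //.
rewrite /walk_edges /= rcons_path.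
rewrite /is_walk /= in wk; rewrite /= in cl.
have /andP[-> hl] := walk_aux wk.
move: wk => /and4P[_ v0e _ _]; move: cl => /eqP cl; rewrite cl in hl.
rewrite /= /meet; apply/set0Pn; exists v0; by rewrite inE hl v0e.
Qed.

Lemma igraph_meet e f : igraph inc e f = (e != f) && meet e f.
Proof. by []. Qed.

Lemma cst_next W x : closed_strict_trail inc W -> x \in walk_edges W ->
  igraph inc x (next (walk_edges W) x) && igraph inc x (prev (walk_edges W) x).
Proof.
move=> h xs; have cy := cst_cycle h.
move: (h) => /and3P[_ /andP[l2 _] us].
have s2 : 2 <= size (walk_edges W) by rewrite size_map.
rewrite !igraph_meet (next_cycle cy xs) eq_sym (next_neq us xs s2) /=.
rewrite eq_sym (prev_neq us xs s2) /= /meet setIC; exact: (prev_cycle cy xs).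
Qed.

Lemma nb_igraph W x y : closed_strict_trail inc W -> nb (walk_edges W) x y ->
  igraph inc x y.
Proof.
move=> h /andP[xs /orP[]/eqP->]; have /andP[a b] := cst_next h xs => //.
Qed.

Lemma count1_uniq (T : eqType) (p : pred T) (s : seq T) a b :
  count p s = 1 -> a \in s -> b \in s -> p a -> p b -> a = b.
Proof.
elim: s => [|c s IH] //=; rewrite !inE.
case pc: (p c) => /=.
  move=> /eqP; rewrite add1n eqSS eqn0Ngt -has_count => /hasPn h.
  move=> /orP[/eqP->|as_] /orP[/eqP->|bs] pa pb //.
  - by have := h b bs; rewrite pb.
  - by have := h a as_; rewrite pa.
  - by have := h a as_; rewrite pa.
move=> h /orP[/eqP->|as_] /orP[/eqP->|bs] pa pb; try by rewrite pc in pa pb *.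
exact: IH.
Qed.

Definition FF (Fam : seq (walk V E)) : rel E :=
  fun x y => has (fun W => nb (walk_edges W) x y) Fam.

Section Fam.
Variable Fam : seq (walk V E).
Hypothesis hF : euler_family inc Fam.

Lemma fam_cst W : W \in Fam -> closed_strict_trail inc W.
Proof. by case: hF => /allP h _ _; apply: h. Qed.

Lemma fam_ex x : exists2 W, W \in Fam & x \in walk_edges W.
Proof.
case: hF => _ h _; have := h x; move=> c; apply/hasP; rewrite has_count c //.
Qed.

Lemma fam_uniq x W W' : W \in Fam -> W' \in Fam -> x \in walk_edges W ->
  x \in walk_edges W' -> W = W'.
Proof.
case: hF => _ h _ => WF W'F xW xW'.
exact: (count1_uniq (h x) WF W'F xW xW').
Qed.

Lemma FF_local x W y : W \in Fam -> x \in walk_edges W ->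
  FF Fam x y = nb (walk_edges W) x y.
Proof.
move=> WF xW; apply/hasP/idP => [[W' W'F h]|h]; last by exists W.
by rewrite (fam_uniq WF W'F xW) //; case/andP: h.
Qed.

Lemma FF_sym : symmetric (FF Fam).
Proof.
suff h : forall x y, FF Fam x y -> FF Fam y x.
  by move=> x y; apply/idP/idP; apply: h.
move=> x y /hasP[W WF hn]; apply/hasP; exists W => //.
apply: nb_sym hn; by case/and3P: (fam_cst WF).
Qed.

Lemma FF_sub x y : FF Fam x y -> igraph inc x y.
Proof. move=> /hasP[W WF hn]; exact: (nb_igraph (fam_cst WF) hn). Qed.

Lemma FF_deg x W : W \in Fam -> x \in walk_edges W ->
  degree (FF Fam) x = if size (walk_edges W) == 2 then 1 else 2.
Proof.
move=> WF xW; have /and3P[_ /andP[l2 _] us] := fam_cst WF.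
have s2 : 2 <= size (walk_edges W) by rewrite size_map.
rewrite /degree.
have -> : [set y | FF Fam x y] = [set next (walk_edges W) x; prev (walk_edges W) x].
  by apply/setP => y; rewrite !inE (FF_local y WF xW) /nb xW.
case: eqP => [h|h].
  by rewrite (next_prev_eq2 us xW h) setUid cards1.
rewrite cards2 next_prev_neq3 //.
by rewrite ltn_neqAle eq_sym s2 andbT; apply/eqP.
Qed.

Lemma FF_conn x W y : W \in Fam -> x \in walk_edges W -> connect (FF Fam) x y ->
  y \in walk_edges W.
Proof.
move=> WF xW /connectP[p hp ->]; elim: p x xW hp => [|z p IH] x xW //=.
move=> /andP[hz hp]; apply: IH hp.
rewrite (FF_local z WF xW) in hz; exact: nb_mem hz.
Qed.
End Fam.

End Main.

Theorem theorem2p12 (V E : finType) (inc : E -> {set V})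
  (hV : 0 < #|V|) (hne : forall e : E, inc e != set0) (h3 : 2 < #|E|) :
  [/\ eulerian inc -> exists c : seq E, hamilton_cycle (igraph inc) c,
      quasi_eulerian inc ->
        exists F : rel E, spanning_subgraph F (igraph inc) /\ components_1_or_2_regular F
    & (exists Fam : seq (walk V E),
         euler_family inc Fam /\ all (fun W => 3 <= walk_length W) Fam) ->
        exists F : rel E, two_factor F (igraph inc)].
Proof.
split.
- move=> [W [h hall]]; exists (walk_edges W); split => //.
    by case/and3P: h.
  apply: cycle_from_next; first by case/and3P: h.
  by move=> x xW; case/andP: (cst_next h xW).
- move=> [Fam hF]; exists (FF Fam); split; first split.
    exact: FF_sym hF.
    exact: FF_sub hF.
  move=> x; have [W WF xW] := fam_ex hF x.
  case: (size (walk_edges W) =P 2) => hs; [left|right] => y hc;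
   rewrite (FF_deg hF WF (FF_conn hF WF xW hc));
   [by rewrite hs eqxx | by move/eqP: hs => /negbTE ->].
- move=> [Fam [hF hl]]; exists (FF Fam); split; first split.
    exact: FF_sym hF.
    exact: FF_sub hF.
  move=> x; have [W WF xW] := fam_ex hF x.
  rewrite (FF_deg hF WF xW); have := allP hl W WF.
  by rewrite /walk_length -(size_map fst); case: (size (walk_edges W) =P 2) => // ->.
Qed.
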